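(* Let $M$, $x$, $T$, $B$, the encoding $\langle\cdot\rangle$ and the coin set $\mathcal{C}$ be as in the context. Let $1\le j\le T$, and let $C$ be the configuration of $M$ on input $x$ at time step $j$, that is, after $j-1$ steps of computation, with the convention that a halting configuration stays put. Run the greedy change-making process with coin set $\mathcal{C}$, starting from the remaining amount $W_C:=\langle C\rangle\cdot B^{(T-j)T}$. Then the next $T-1$ or $T-2$ coins selected reduce the remaining amount exactly to $W_{\Delta(C)}:=\langle\Delta(C)\rangle\cdot B^{(T-j-1)T}$. Here $\Delta(C)$ is the successor configuration of $C$ under $\delta$, with $\Delta(C)=C$ if $C$ is halting, and $B^{(-1)T}$ is read as $0$.
   Context: Turing machine. $M=\langle Q,\Gamma,\Sigma,\delta,q_0,q_{\mathrm{accept}},q_{\mathrm{reject}}\rangle$ is a deterministic single-tape Turing machine: - $\perp\in\Gamma$ is the blank symbol and $\Sigma\subseteq\Gamma\setminus\{\perp\}$. - $F=\{q_{\mathrm{accept}},q_{\mathrm{reject}}\}$ is the set of halting states. - $\delta:(Q\setminus F)\times\Gamma\to Q\times\Gamma\times\{L,R\}$ is the transition function. Assumptions on $M$: - The first tape cell always holds a left endmarker $\$\in\Gamma$. Whenever the head reads $\$$ in a state $q\notin F$, we have $\delta(q,\$)=(q',\$,R)$ for some $q'$. - Before entering a halting state, the head moves to the endmarker, then overwrites cells 2 and 3 with $\perp$, and halts over cell 2 in the halting state. - On input $x$ of length $n$, $M$ halts within $T=C_M n^{\ell}$ steps, where $T\ge n+3$. Hence only tape cells $1,\dots,T$ are used,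 and the head never reaches cell $T$. A configuration consists of a state $q$, a head position $h$ with $1\le h\le T$, and tape contents $a_1\cdots a_T\in\Gamma^T$. The configuration at time step 1 has state $q_0$, head position 1, and tape $\$\,x_1\cdots x_n\perp^{T-n-1}$. Numerical encoding: - Fix bijections $f:Q\to\{1,\dots,s\}$ and $g:\Gamma\to\{1,\dots,k\}$, where $s=|Q|$ and $k=|\Gamma|$. - Encode a pair $(q,a)$ by $p(q,a):=f(q)k+g(a)$. - Fix an integer base $B\ge(s+1)k+2$. - A digit string $d_1\cdots d_T$ in base $B$ denotes $\sum_{i=1}^T d_iB^{T-i}$. - For a configuration $C$ with state $q$, head position $h$ and tape $a_1\cdots a_T$, set $\langle C\rangle$ to be the digit string with $d_h=p(q,a_h)$ and $d_i=g(a_i)$ for $i\ne h$. Coin set $\mathcal{C}$ (with $B^{(-1)T}:=0$) consists of exactly the following three kinds of coins. (i) Copy coins. For $1\le i,j\le T$ and $a\in\Gamma$: $$c_{\mathrm{copy}}(a,i,j)=g(a)B^{T-i}\big(B^{(T-j)T}-B^{(T-j-1)T}\big).$$ (ii) Transition coins. For $2\le i\le T-1$, $1\le j\le T$, $q\in Q$, and $a^-,a,a^+\in\Gamma$: $$c_{\mathrm{transition}}(q,a^-,a,a^+,i,j)=u\,B^{(T-j)T}-v\,B^{(T-j-1)T},$$ where $u=g(a^-)B^{T-i+1}+p(q,a)B^{T-i}+g(a^+)B^{T-i-1}$ and $v$ is defined by cases: - if $q\notin F$ and $\delta(q,a)=(q',a',L)$: $v=p(q',a^-)B^{T-i+1}+g(a')B^{T-i}+g(a^+)B^{T-i-1}$;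 - if $q\notin F$ and $\delta(q,a)=(q',a',R)$: $v=g(a^-)B^{T-i+1}+g(a')B^{T-i}+p(q',a^+)B^{T-i-1}$; - if $q\in F$: $v=u$. (iii) Left-end transition coins. For $q\in Q\setminus F$, $a^+\in\Gamma$, and $1\le j\le T$, with $\delta(q,\$)=(q',\$,R)$: $$c^{\text{left-end}}_{\mathrm{transition}}(q,a^+,j)=\big(p(q,\$)B^{T-1}+g(a^+)B^{T-2}\big)B^{(T-j)T}-\big(g(\$)B^{T-1}+p(q',a^+)B^{T-2}\big)B^{(T-j-1)T}.$$ Greedy change-making process: from a remaining amount $W'$, repeatedly select the largest coin in $\mathcal{C}$ that is at most $W'$, and subtract it from $W'$. *)

(* Defs.v *)
From HB Require Import structures.
From mathcomp Require Import all_boot all_order all_algebra.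
Import Order.TTheory GRing.Theory Num.Theory.
Set Implicit Arguments. Unset Strict Implicit. Unset Printing Implicit Defensive.
Local Open Scope ring_scope.

(* Directions: [true] = R, [false] = L.  delta is given as a total function;
   only its values on non-halting states are ever used. *)
Record TM := {
  tm_Q : finType;
  tm_G : finType;
  tm_blank : tm_G;
  tm_dollar : tm_G;
  tm_Sigma : pred tm_G;
  tm_delta : tm_Q -> tm_G -> tm_Q * tm_G * bool;
  tm_q0 : tm_Q;
  tm_qacc : tm_Q;
  tm_qrej : tm_Q
}.
Arguments tm_blank : clear implicits.
Arguments tm_dollar : clear implicits.
Arguments tm_Sigma : clear implicits.
Arguments tm_q0 : clear implicits.
Arguments tm_qacc : clear implicits.
Arguments tm_qrej : clear implicits.
Arguments tm_delta {t}.

Definition halting (M : TM) (q : tm_Q M) : bool :=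
  (q == tm_qacc M) || (q == tm_qrej M).

(* Configurations: state, head position (cells numbered from 1), tape
   contents (cell i holds [cf_tape i]). *)
Record config (M : TM) := Config {
  cf_state : tm_Q M;
  cf_head : nat;
  cf_tape : nat -> tm_G M
}.

Definition step (M : TM) (c : config M) : config M :=
  if halting (cf_state c) then c else
  let: (q', a', d) := tm_delta (cf_state c) (cf_tape c (cf_head c)) in
  Config q' (if d then (cf_head c).+1 else (cf_head c).-1)
    (fun i => if i == cf_head c then a' else cf_tape c i).

Definition init_config (M : TM) (x : seq (tm_G M)) : config M :=
  Config (tm_q0 M) 1
    (fun i => if i == 1%N then tm_dollar M
              else if (2 <= i <= (size x).+1)%N then nth (tm_blank M) x (i - 2)
              else tm_blank M).

(* Configuration at time step j (j >= 1), i.e. after j-1 steps. *)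
Definition conf_at (M : TM) (x : seq (tm_G M)) (j : nat) : config M :=
  iter j.-1 (@step M) (init_config x).

Definition penc (M : TM) (f : tm_Q M -> nat) (g : tm_G M -> nat)
    (q : tm_Q M) (a : tm_G M) : nat :=
  (f q * #|tm_G M| + g a)%N.

Definition enc (M : TM) (f : tm_Q M -> nat) (g : tm_G M -> nat) (B T : nat)
    (c : config M) : int :=
  \sum_(1 <= i < T.+1)
     ((if i == cf_head c then penc f g (cf_state c) (cf_tape c i)
       else g (cf_tape c i))%:Z * (B%:Z) ^+ (T - i)).

Definition Bcur (B T j : nat) : int := (B%:Z) ^+ ((T - j) * T).
(* B^((T-j-1)T), read as 0 when j = T (more generally when j >= T). *)
Definition Bnext (B T j : nat) : int :=
  if (j < T)%N then (B%:Z) ^+ ((T - j.+1) * T) else 0.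

Definition c_copy (M : TM) (g : tm_G M -> nat) (B T : nat)
    (a : tm_G M) (i j : nat) : int :=
  (g a)%:Z * (B%:Z) ^+ (T - i) * (Bcur B T j - Bnext B T j).

Definition c_trans_u (M : TM) (f : tm_Q M -> nat) (g : tm_G M -> nat) (B T : nat)
    (q : tm_Q M) (am a ap : tm_G M) (i : nat) : int :=
  (g am)%:Z * (B%:Z) ^+ (T - i).+1 + (penc f g q a)%:Z * (B%:Z) ^+ (T - i)
  + (g ap)%:Z * (B%:Z) ^+ (T - i).-1.

Definition c_trans_v (M : TM) (f : tm_Q M -> nat) (g : tm_G M -> nat) (B T : nat)
    (q : tm_Q M) (am a ap : tm_G M) (i : nat) : int :=
  if halting q then c_trans_u f g B T q am a ap i else
  let: (q', a', d) := tm_delta q a in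
  if d then
    (g am)%:Z * (B%:Z) ^+ (T - i).+1 + (g a')%:Z * (B%:Z) ^+ (T - i)
    + (penc f g q' ap)%:Z * (B%:Z) ^+ (T - i).-1
  else
    (penc f g q' am)%:Z * (B%:Z) ^+ (T - i).+1 + (g a')%:Z * (B%:Z) ^+ (T - i)
    + (g ap)%:Z * (B%:Z) ^+ (T - i).-1.

Definition c_trans (M : TM) (f : tm_Q M -> nat) (g : tm_G M -> nat) (B T : nat)
    (q : tm_Q M) (am a ap : tm_G M) (i j : nat) : int :=
  c_trans_u f g B T q am a ap i * Bcur B T j
  - c_trans_v f g B T q am a ap i * Bnext B T j.

(* (iii) left-end transition coins, with delta(q,$) = (q',$,R). *)
Definition c_left (M : TM) (f : tm_Q M -> nat) (g : tm_G M -> nat) (B T : nat)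
    (q : tm_Q M) (ap : tm_G M) (j : nat) : int :=
  let q' := (tm_delta q (tm_dollar M)).1.1 in
  ((penc f g q (tm_dollar M))%:Z * (B%:Z) ^+ (T - 1) + (g ap)%:Z * (B%:Z) ^+ (T - 2))
    * Bcur B T j
  - ((g (tm_dollar M))%:Z * (B%:Z) ^+ (T - 1) + (penc f g q' ap)%:Z * (B%:Z) ^+ (T - 2))
    * Bnext B T j.

Definition is_coin (M : TM) (f : tm_Q M -> nat) (g : tm_G M -> nat) (B T : nat)
    (c : int) : Prop :=
  (exists (a : tm_G M) (i j : nat),
      [/\ (1 <= i <= T)%N, (1 <= j <= T)%N & c = c_copy g B T a i j])
  \/ (exists (q : tm_Q M) (am a ap : tm_G M) (i j : nat),
      [/\ (2 <= i <= T.-1)%N, (1 <= j <= T)%N & c = c_trans f g B T q am a ap i j])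
  \/ (exists (q : tm_Q M) (ap : tm_G M) (j : nat),
      [/\ ~~ halting q, (1 <= j <= T)%N & c = c_left f g B T q ap j]).

Definition greedy_step (coin : int -> Prop) (W W' : int) : Prop :=
  exists c, [/\ coin c, c <= W, (forall c', coin c' -> c' <= W -> c' <= c)
              & W' = W - c].

Fixpoint greedy_run (coin : int -> Prop) (m : nat) (W W' : int) : Prop :=
  match m with
  | 0 => W = W'
  | m'.+1 => exists W1, greedy_step coin W W1 /\ greedy_run coin m' W1 W'
  end.

(* Main.v *)
Require Import Defs.
From mathcomp Require Import all_boot all_order all_algebra.
Import Order.TTheory GRing.Theory Num.Theory.
From mathcomp Require Import zify.
Local Open Scope ring_scope.

Lemma PoszX (B e : nat) : (B%:Z) ^+ e = (B ^ e)%N%:Z.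
Proof. by rewrite -[in RHS]natz natrX natz. Qed.
Lemma le_nat_Z (a b c d : nat) : ((a%:Z - b%:Z <= c%:Z - d%:Z) <-> (a + d <= c + b)%N).
Proof. rewrite lerBlDr addrAC lerBrDr -!PoszD lez_nat. by []. Qed.

Lemma dl (B a : nat) (Z : nat) : (a < B)%N -> (a*Z + Z <= B*Z)%N.
Proof. move=> h; rewrite -mulSnr leq_mul2r; apply/orP; right; lia. Qed.
Lemma mle (a b : nat) (Z : nat) : (a <= b)%N -> (a*Z <= b*Z)%N.
Proof. by move=> h; rewrite leq_mul2r h orbT. Qed.

Lemma aux_prod U Z : (1 <= U)%N -> (1 <= Z)%N -> (U + Z <= U * Z + 1)%N.
Proof. move=> h1 h2; nia. Qed.

Section Main.
Local Open Scope nat_scope.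
Variable M : TM.
Variables (f : tm_Q M -> nat) (g : tm_G M -> nat) (B T : nat).
Hypothesis hf_inj : injective f.
Hypothesis hf_rng : forall q, 1 <= f q <= #|tm_Q M|.
Hypothesis hg_inj : injective g.
Hypothesis hg_rng : forall a, 1 <= g a <= #|tm_G M|.
Hypothesis hB : (#|tm_Q M|.+1) * #|tm_G M| + 2 <= B.
Hypothesis hT3 : 3 <= T.

Local Notation k := #|tm_G M|.
Local Notation s := #|tm_Q M|.

Lemma k_pos : 0 < k.
Proof. by have /andP[h1 h2] := hg_rng (tm_blank M); lia. Qed.

Lemma penc_ub q a : penc f g q a + 2 <= B.
Proof.
rewrite /penc; have := hf_rng q; have := hg_rng a.
have h := @mle (f q).+1 s.+1 k.
move=> /andP[? ?] /andP[? ?]. have := h ltac:(lia). lia.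
Qed.
Lemma penc_lb q a : k < penc f g q a.
Proof.
rewrite /penc; have := hf_rng q; have := hg_rng a.
have h := @mle 1 (f q) k.
move=> /andP[? ?] /andP[? ?]. have := h ltac:(lia). lia.
Qed.
Lemma g_ub a : g a + 2 <= B.
Proof.
have := hg_rng a; have h := @mle 1 s.+1 k; have := h ltac:(lia). lia.
Qed.
Lemma B_ge2 : 2 <= B.
Proof. have := g_ub (tm_blank M); lia. Qed.

Lemma penc_inj {q a q' a'} : penc f g q a = penc f g q' a' -> q = q' /\ a = a'.
Proof.
rewrite /penc => e.
have := hg_rng a; have := hg_rng a' => /andP[? ?] /andP[? ?].
have : f q = f q'.
  case: (ltngtP (f q) (f q')) => // hlt.
  - have := @mle (f q).+1 (f q') k hlt. lia.
  - have := @mle (f q').+1 (f q) k hlt. lia.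
move=> hfe; rewrite hfe in e.
have hge : g a = g a' by lia.
by split; [apply: hf_inj | apply: hg_inj].
Qed.

Definition pw i := B ^ (T - i).
Lemma pw_gt0 i : 0 < pw i.
Proof. rewrite /pw expn_gt0; have := B_ge2; lia. Qed.
Lemma pwS {i} : i < T -> pw i = B * pw i.+1.
Proof. by move=> h; rewrite /pw -expnS subnSK. Qed.
Lemma pw_lt {t i} : t < i -> i <= T -> B * pw i <= pw t.
Proof.
move=> h1 h2; rewrite /pw -expnS; apply: leq_pexp2l; first by have := B_ge2; lia.
lia.
Qed.
Lemma pw1 : B * pw 1 = B ^ T.
Proof. rewrite /pw -expnS; congr (_ ^ _); lia. Qed.


Definition Rs (d : nat -> nat) i := \sum_(i <= p < T.+1) d p * pw p.
Definition Ps (e : nat -> nat) i := \sum_(1 <= p < i) e p * pw p.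

Lemma Rs_S d i : i <= T -> Rs d i = d i * pw i + Rs d i.+1.
Proof. by move=> h; rewrite /Rs big_ltn. Qed.
Lemma Rs_end d : Rs d T.+1 = 0.
Proof. by rewrite /Rs big_geq. Qed.
Lemma Rs_lt d i : (forall p, d p < B) -> i <= T -> Rs d i.+1 < pw i.
Proof.
move=> hd; elim: {i}(T - i) {-2}i (erefl (T - i)) => [|n IH] i hn hi.
  have -> : i = T by lia. by rewrite Rs_end pw_gt0.
have hiT : i < T by lia.
rewrite Rs_S // (pwS hiT).
have := IH i.+1 ltac:(lia) hiT. have := @dl _ _ (pw i.+1) (hd i.+1). lia.
Qed.
Lemma Rs_le2 d i : (forall p, d p + 2 <= B) -> i <= T -> (Rs d i).+2 <= B * pw i.
Proof.
move=> hd hi; rewrite Rs_S //.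
have := Rs_lt d i ltac:(move=> p; have := hd p; lia) hi.
have := @dl B (d i).+1 (pw i) ltac:(have := hd i; lia) ; have := pw_gt0 i. lia.
Qed.
Lemma Ps_S e i : 1 <= i -> Ps e i.+1 = Ps e i + e i * pw i.
Proof. by move=> h; rewrite /Ps big_nat_recr. Qed.
Lemma Ps_1 e : Ps e 1 = 0.
Proof. by rewrite /Ps big_geq. Qed.
Lemma Ps_le e i : (forall p, e p < B) -> 1 <= i <= T -> Ps e i + B * pw i <= B ^ T.
Proof.
move=> he; elim: i => [|i IH] // /andP[h1 h2].
case: (ltnP 1 i.+1) => hi; last first.
  have -> : i = 0 by lia. by rewrite Ps_1 pw1.
rewrite Ps_S; last by lia.
have := IH ltac:(lia). have := @pwS i ltac:(lia).
have := @dl _ _ (pw i) (he i). lia.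
Qed.
Lemma Ps_lt e i : (forall p, e p < B) -> 1 <= i <= T.+1 -> Ps e i < B ^ T.
Proof.
move=> he /andP[h1 h2]; case: (ltnP i T.+1) => h3.
  have := Ps_le e i he ltac:(lia). have := pw_gt0 i. have := B_ge2.
  have := @mle 1 B (pw i) ltac:(have := B_ge2; lia). lia.
have -> : i = T.+1 by lia.
rewrite Ps_S; last by lia.
have := Ps_le e T he ltac:(lia). have := @dl _ _ (pw T) (he T). have := pw_gt0 T. lia.
Qed.

Definition good (R P D E U V : nat) :=
  U.+1 <= D \/ (R < U /\ V + P < B ^ T) \/ R.+2 <= U \/ (U = D /\ V = E).

Lemma nY {n X Y} : 0 < X -> Y * B ^ T <= X -> n < B ^ T -> n * Y < X.
Proof.
move=> hX hY hn; case: (posnP Y) => [->|hY0]; first by rewrite muln0.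
apply: leq_trans hY; rewrite mulnC ltn_pmul2l //.
Qed.

Lemma max_level_eq X Y R P D E U V : 0 < X -> Y * B ^ T <= X -> P < B ^ T ->
  E < B ^ T -> V < B ^ T -> good R P D E U V ->
  U * X <= R * X + P * Y + V * Y -> U * X + E * Y <= D * X + V * Y.
Proof.
move=> hX hY hP hE hV [h|[[h1 h2]|[h|[-> ->]]]] hfit //.
- have := nY hX hY hE. have := @mle U.+1 D X h. lia.
- have := nY hX hY h2. have := @mle R.+1 U X h1. lia.
- have := nY hX hY hP. have := nY hX hY hV. have := @mle R.+2 U X h. lia.
Qed.


Definition Xn j := B ^ ((T - j) * T).
Definition Yn j := if j < T then B ^ ((T - j.+1) * T) else 0.

Lemma Bcur_n j : (Bcur B T j = (Xn j)%:Z)%R.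
Proof. by rewrite /Bcur PoszX. Qed.
Lemma Bnext_n j : (Bnext B T j = (Yn j)%:Z)%R.
Proof. by rewrite /Bnext /Yn; case: ifP => _ //; rewrite PoszX. Qed.
Lemma Xn_pos j : 0 < Xn j.
Proof. rewrite /Xn expn_gt0; have := B_ge2; lia. Qed.
Lemma XY_eq j : j < T -> Xn j = B ^ T * Yn j.
Proof.
move=> h; rewrite /Xn /Yn h -expnD; congr (_ ^ _).
have -> : T - j = (T - j.+1).+1 by lia. by rewrite mulSn.
Qed.
Lemma YX j : j <= T -> Yn j * B ^ T <= Xn j.
Proof.
move=> h; case: (ltnP j T) => h'; first by rewrite XY_eq // mulnC.
by rewrite /Yn ltnNge h'.
Qed.
Lemma powmono a b : a <= b -> B ^ a <= B ^ b.
Proof. by apply: leq_pexp2l; have := B_ge2; lia. Qed.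

Definition unat q am a ap i :=
  g am * pw i.-1 + penc f g q a * pw i + g ap * pw i.+1.
Definition vnat q am a ap i :=
  if halting q then unat q am a ap i else
  let: (q', a', dd) := tm_delta q a in
  if dd then g am * pw i.-1 + g a' * pw i + penc f g q' ap * pw i.+1
  else penc f g q' am * pw i.-1 + g a' * pw i + g ap * pw i.+1.

Lemma copy_n a i j : (c_copy g B T a i j =
  ((g a * pw i * Xn j)%:Z - (g a * pw i * Yn j)%:Z))%R.
Proof. by rewrite /c_copy Bcur_n Bnext_n PoszX mulrBr -!PoszM. Qed.

Lemma trans_n q am a ap i j : 2 <= i < T -> (c_trans f g B T q am a ap i j =
  ((unat q am a ap i * Xn j)%:Z - (vnat q am a ap i * Yn j)%:Z))%R.
Proof.
move=> /andP[h1 h2].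
have e1 : (T - i).+1 = T - i.-1 by lia.
have e2 : (T - i).-1 = T - i.+1 by lia.
rewrite /c_trans /c_trans_v /c_trans_u Bcur_n Bnext_n !PoszX e1 e2 /vnat /unat /pw /penc.
case: ifP => _.
  by rewrite !(PoszD, PoszM).
case: (tm_delta q a) => [[q' a'] []]; by rewrite !(PoszD, PoszM).
Qed.

Lemma left_n q ap j : (c_left f g B T q ap j =
  (((penc f g q (tm_dollar M) * pw 1 + g ap * pw 2) * Xn j)%:Z
   - ((g (tm_dollar M) * pw 1 + penc f g (tm_delta q (tm_dollar M)).1.1 ap * pw 2) * Yn j)%:Z))%R.
Proof. by rewrite /c_left Bcur_n Bnext_n !PoszX /pw /penc !(PoszD, PoszM). Qed.

Definition shape U V :=
  (exists a i, [/\ 1 <= i <= T, U = g a * pw i & V = U])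
  \/ (exists q am a ap i, [/\ 2 <= i < T, U = unat q am a ap i & V = vnat q am a ap i])
  \/ (exists q ap, [/\ ~~ halting q, U = penc f g q (tm_dollar M) * pw 1 + g ap * pw 2
        & V = g (tm_dollar M) * pw 1 + penc f g (tm_delta q (tm_dollar M)).1.1 ap * pw 2]).

Lemma coin_inv c : is_coin f g B T c -> exists j' U V,
  [/\ 1 <= j' <= T, shape U V & c = ((U * Xn j')%:Z - (V * Yn j')%:Z)%R].
Proof.
case=> [[a [i [j' [hi hj ->]]]]|[[q [am [a [ap [i [j' [hi hj ->]]]]]]]|[q [ap [j' [hq hj ->]]]]]].
- exists j', (g a * pw i), (g a * pw i); split => //; last by rewrite copy_n.
  left; by exists a, i.
- have hi' : 2 <= i < T by move: hi; case: T hT3 => // T' _; rewrite /=; lia.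
  exists j', (unat q am a ap i), (vnat q am a ap i); split => //; last by rewrite trans_n.
  right; left; by exists q, am, a, ap, i.
- exists j', (penc f g q (tm_dollar M) * pw 1 + g ap * pw 2),
   (g (tm_dollar M) * pw 1 + penc f g (tm_delta q (tm_dollar M)).1.1 ap * pw 2).
  split => //; last by rewrite left_n.
  right; right; by exists q, ap.
Qed.


Lemma Bpw_le t : 1 <= t -> B * pw t <= B ^ T.
Proof. move=> h; rewrite /pw -expnS; apply: powmono; lia. Qed.
Lemma B_le_pw t : t < T -> B <= pw t.
Proof. move=> h; rewrite /pw; have := @powmono 1 (T - t) ltac:(lia); by rewrite expn1. Qed.

Lemma three_lt {a1 a2 a3 i} : a1 < B -> a2 < B -> a3 < B -> 2 <= i < T ->
  a1 * pw i.-1 + a2 * pw i + a3 * pw i.+1 < B * pw i.-1.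
Proof.
move=> h1 h2 h3 hi.
have e1 : pw i.-1 = B * pw i by rewrite (@pwS i.-1); [rewrite prednK //; lia | lia].
have e2 : pw i = B * pw i.+1 by rewrite (@pwS i); lia.
have := @dl _ _ (pw i.-1) h1. have := @dl _ _ (pw i) h2. have := @dl _ _ (pw i.+1) h3.
have := pw_gt0 i.+1. lia.
Qed.

Lemma vnat_digits q am a ap i : exists a1 a2 a3, [/\ a1 < B, a2 < B, a3 < B &
  vnat q am a ap i = a1 * pw i.-1 + a2 * pw i + a3 * pw i.+1].
Proof.
have hg x : g x < B by have := g_ub x; lia.
have hp x y : penc f g x y < B by have := penc_ub x y; lia.
rewrite /vnat /unat; case: ifP => _.
  by exists (g am), (penc f g q a), (g ap).
case: (tm_delta q a) => [[q' a'] []].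
  by exists (g am), (g a'), (penc f g q' ap).
by exists (penc f g q' am), (g a'), (g ap).
Qed.

Lemma shape_bounds {U V} : shape U V ->
  [/\ U < B ^ T, V < B ^ T & V + B ^ T <= U * B ^ T + 1].
Proof.
have hg x : g x < B by have := g_ub x; lia.
have hp x y : penc f g x y < B by have := penc_ub x y; lia.
case=> [[a [i [hi -> ->]]]|[[q [am [a [ap [i [hi -> ->]]]]]]|[q [ap [hq -> ->]]]]].
- have := @dl _ _ (pw i) (hg a). have := Bpw_le i ltac:(lia). have := pw_gt0 i.
  have := @mle 1 (g a * pw i) (B ^ T). have := hg_rng a.
  have := @mle 1 (g a) (pw i). move=> h1 /andP[h2 h3] h4; have := h1 h2; have := h4 ltac:(have := pw_gt0 i; lia).
  have := @aux_prod (g a * pw i) (B ^ T) ltac:(rewrite muln_gt0 pw_gt0; lia) ltac:(rewrite expn_gt0; have := B_ge2; lia).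
  split; lia.
- have [a1 [a2 [a3 [h1 h2 h3 ->]]]] := vnat_digits q am a ap i.
  have hU := three_lt (hg am) (hp q a) (hg ap) hi.
  have hV := three_lt h1 h2 h3 hi.
  have hb := Bpw_le i.-1 ltac:(lia).
  have hB1 := B_le_pw i.-1 ltac:(lia).
  have hga := hg_rng am.
  have h5 := @mle 1 (g am) (pw i.-1) ltac:(lia).
  have h6 := @mle 2 (unat q am a ap i) (B ^ T) ltac:(rewrite /unat; have := B_ge2; lia).
  rewrite /unat in h6 hU *. split; lia.
- have h1 := @dl _ _ (pw 1) (hp q (tm_dollar M)).
  have h2 := @dl _ _ (pw 1) (hg (tm_dollar M)).
  have e1 : pw 1 = B * pw 2 by apply: pwS; lia.
  have h3 := @dl _ _ (pw 2) (hg ap).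
  have h4 := @dl _ _ (pw 2) (hp (tm_delta q (tm_dollar M)).1.1 ap).
  have hb := Bpw_le 1 ltac:(lia).
  have hB1 := B_le_pw 1 ltac:(lia).
  have hpl := penc_lb q (tm_dollar M).
  have h5 := @mle 1 (penc f g q (tm_dollar M)) (pw 1) ltac:(lia).
  have h6 := @mle 2 (penc f g q (tm_dollar M) * pw 1 + g ap * pw 2) (B ^ T) ltac:(have := B_ge2; lia).
  have := pw_gt0 2. split; lia.
Qed.


Lemma max_all j R P D E : 1 <= j <= T -> R.+2 <= B ^ T -> P < B ^ T -> E < B ^ T ->
  E + B ^ T <= D * B ^ T + 1 ->
  (forall U V, shape U V -> good R P D E U V) ->
  forall c, is_coin f g B T c -> (c <= (R * Xn j + P * Yn j)%:Z)%R ->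
  (c <= (D * Xn j)%:Z - (E * Yn j)%:Z)%R.
Proof.
move=> hj hR hP hE hED hgood c /coin_inv [j' [U [V [hj' hsh ->]]]].
have [hU hV hUV] := shape_bounds hsh.
rewrite -[X in (_ <= X)%R](subr0) le_nat_Z addn0 => hfit.
apply/le_nat_Z.
have hBT : 0 < B ^ T by rewrite expn_gt0; have := B_ge2; lia.
case: (ltngtP j' j) => hjj.
- (* lower level: coin too big *)
  exfalso.
  have hj'T : j' < T by lia.
  have e1 := XY_eq j' hj'T.
  have hYX : Xn j <= Yn j'.
    rewrite /Xn /Yn hj'T; apply: powmono; apply: leq_mul => //; lia.
  have hPY := nY (Xn_pos j) (YX j ltac:(lia)) hP.
  have h1 := @mle (V + B ^ T) (U * B ^ T + 1) (Yn j') hUV.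
  have h2 := @mle R.+2 (B ^ T) (Yn j') hR.
  have h3 : R.+1 * Xn j <= R.+1 * Yn j' by apply: leq_mul.
  rewrite e1 in hfit. lia.
- (* higher level: coin small *)
  have hjT : j < T by lia.
  have e1 := XY_eq j hjT.
  have hXY : Xn j' <= Yn j.
    rewrite /Xn /Yn hjT; apply: powmono; apply: leq_mul => //; lia.
  have h1 := @mle (E + B ^ T) (D * B ^ T + 1) (Yn j) hED.
  have h2 : U * Xn j' <= U * Yn j by apply: leq_mul.
  have h3 := @mle U.+1 (B ^ T) (Yn j) hU.
  rewrite e1. lia.
- subst j'.
  apply: (@max_level_eq _ _ _ _ _ _ _ _ (Xn_pos j) (YX j ltac:(lia)) hP hE hV (hgood _ _ hsh)). lia.
Qed.


Lemma top_cmp i t dl0 U' U V R R' di D P E :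
  1 <= i <= T -> 1 <= t <= T -> U = dl0 * pw t + U' -> U' < pw t -> 1 <= dl0 -> dl0 < B ->
  V < B * pw t -> R = di * pw i + R' -> R' < pw i -> 1 <= di -> di + 2 <= B ->
  di * pw i <= D -> P + B * pw i <= B ^ T ->
  (t = i -> dl0 = di -> good R P D E U V) -> good R P D E U V.
Proof.
move=> hi ht hU hU' hd1 hd2 hV hR hR' hdi1 hdi2 hD hP hres.
have hpi := pw_gt0 i; have hpt := pw_gt0 t.
case: (ltngtP t i) => hti.
- right; right; left.
  have h1 := pw_lt hti ltac:(lia).
  have h2 := @mle 1 dl0 (pw t) hd1.
  have h3 := @dl B di.+1 (pw i) ltac:(lia).
  lia.
- left.
  have h1 := pw_lt hti ltac:(lia).
  have h2 := @dl B dl0 (pw t) hd2.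
  have h3 := @mle 1 di (pw i) hdi1.
  lia.
- subst t. case: (ltngtP dl0 di) => hdd.
  + left. have := @mle dl0.+1 di (pw i) hdd. lia.
  + right; left. have := @mle di.+1 dl0 (pw i) hdd. lia.
  + exact: hres.
Qed.

Definition dig q h (tp : nat -> tm_G M) p :=
  if p == h then penc f g q (tp p) else g (tp p).

Lemma dig_ub q h tp p : dig q h tp p + 2 <= B.
Proof. rewrite /dig; case: ifP => _; [exact: penc_ub | exact: g_ub]. Qed.
Lemma dig_lt q h tp p : dig q h tp p < B.
Proof. have := dig_ub q h tp p; lia. Qed.
Lemma dig_pos q h tp p : 1 <= dig q h tp p.
Proof.
rewrite /dig; case: ifP => _; last by have := hg_rng (tp p); lia.
have := penc_lb q (tp p); lia.
Qed.
Lemma dig_ne q h tp p : p != h -> dig q h tp p = g (tp p).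
Proof. by rewrite /dig => /negbTE ->. Qed.
Lemma dig_h q h tp : dig q h tp h = penc f g q (tp h).
Proof. by rewrite /dig eqxx. Qed.

Lemma gk a : g a <= k.
Proof. by have /andP[] := hg_rng a. Qed.

Lemma trans_top q a ap i : 2 <= i < T ->
  penc f g q a * pw i + g ap * pw i.+1 < pw i.-1.
Proof.
move=> hi.
have e1 : pw i.-1 = B * pw i by rewrite (@pwS i.-1); [rewrite prednK //; lia | lia].
have e2 : pw i = B * pw i.+1 by rewrite (@pwS i); lia.
have := @dl B (penc f g q a) (pw i) ltac:(have := penc_ub q a; lia).
have := @dl B (g ap) (pw i.+1) ltac:(have := g_ub ap; lia).
have := pw_gt0 i.+1. lia.
Qed.

Lemma left_V q ap : g (tm_dollar M) * pw 1 + penc f g q ap * pw 2 < B * pw 1.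
Proof.
have e1 : pw 1 = B * pw 2 by apply: pwS; lia.
have := @dl B (g (tm_dollar M)) (pw 1) ltac:(have := g_ub (tm_dollar M); lia).
have := @dl B (penc f g q ap) (pw 2) ltac:(have := penc_ub q ap; lia).
have := pw_gt0 2. lia.
Qed.
Lemma left_U ap : g ap * pw 2 < pw 1.
Proof.
have e1 : pw 1 = B * pw 2 by apply: pwS; lia.
have := @dl B (g ap) (pw 2) ltac:(have := g_ub ap; lia).
have := pw_gt0 2. lia.
Qed.

Lemma vnat_lt q am a ap i : 2 <= i < T -> vnat q am a ap i < B * pw i.-1.
Proof.
move=> hi; have [a1 [a2 [a3 [h1 h2 h3 ->]]]] := vnat_digits q am a ap i.
exact: three_lt.
Qed.


Lemma copy_good q h tp i P U V : 1 <= i <= T -> (i.+2 <= h \/ h.+2 <= i) ->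
  P + B * pw i <= B ^ T -> shape U V ->
  good (Rs (dig q h tp) i) P (dig q h tp i * pw i) (dig q h tp i * pw i) U V.
Proof.
move=> hi hih hP hsh.
set d := dig q h tp.
have hR := Rs_S d i ltac:(lia).
have hR' := Rs_lt d i (dig_lt q h tp) ltac:(lia).
have hdi : d i = g (tp i) by apply: dig_ne; apply/eqP; lia.
have hdpos := dig_pos q h tp i. have hdub := dig_ub q h tp i.
case: hsh => [[a [i' [hi' -> ->]]]|[[q' [am [a [ap [i' [hi' -> ->]]]]]]|[q' [ap [hq' -> ->]]]]].
- have hga := hg_rng a; have hgb := g_ub a.
  apply: (top_cmp _ _ _ _ _ _ _ _ _ _ _ _ hi hi' (esym (addn0 _)) (pw_gt0 i') _ _ _ hR hR' hdpos hdub (leqnn _) hP).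
  + lia.
  + lia.
  + have := @dl B (g a) (pw i') ltac:(lia). have := pw_gt0 i'. lia.
  + move=> ei ea; subst i'; right; right; right; by rewrite ea.
- have hga := hg_rng am; have hgb := g_ub am.
  have hU : unat q' am a ap i' = g am * pw i'.-1 + (penc f g q' a * pw i' + g ap * pw i'.+1)
    by rewrite /unat addnA.
  apply: (top_cmp _ _ _ _ _ _ _ _ _ _ _ _ hi _ hU (trans_top q' a ap i' hi') _ _ _ hR hR' hdpos hdub (leqnn _) hP).
  + lia.
  + lia.
  + lia.
  + exact: vnat_lt.
  + move=> ei ea; right; left.
    have ei' : i' = i.+1 by lia. subst i'.
    have hR2 := Rs_S d i.+1 ltac:(lia).
    have hR2' := Rs_lt d i.+1 (dig_lt q h tp) ltac:(lia).
    have hdi1 : d i.+1 = g (tp i.+1) by apply: dig_ne; apply/eqP; lia.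
    have hpl := penc_lb q' a. have hgk := gk (tp i.+1).
    have := @mle (d i.+1).+1 (penc f g q' a) (pw i.+1) ltac:(lia).
    have := vnat_lt q' am a ap i.+1 hi'.
    rewrite /unat /=. simpl in ea. lia.
- have hpl := penc_lb q' (tm_dollar M). have hpu := penc_ub q' (tm_dollar M).
  apply: (top_cmp _ _ _ _ _ _ _ _ _ _ _ _ hi _ erefl (left_U ap) _ _ (left_V _ _) hR hR' hdpos hdub (leqnn _) hP).
  + lia.
  + lia.
  + lia.
  + move=> ei ea; subst i. have := gk (tp 1). lia.
Qed.


Lemma trans_good q h tp P U V : 2 <= h < T -> P + B * pw h.-1 <= B ^ T -> shape U V ->
  good (Rs (dig q h tp) h.-1) P (unat q (tp h.-1) (tp h) (tp h.+1) h)
    (vnat q (tp h.-1) (tp h) (tp h.+1) h) U V.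
Proof.
move=> hh hP hsh.
set d := dig q h tp.
set i := h.-1.
rewrite -/i in hP.
have ei : i.+1 = h by rewrite /i prednK //; lia.
have hi : 1 <= i <= T by rewrite /i; lia.
have hR := Rs_S d i ltac:(lia). rewrite ei in hR.
have hR' := Rs_lt d i (dig_lt q h tp) ltac:(lia). rewrite ei in hR'.
have hdi : d i = g (tp i) by apply: dig_ne; apply/eqP; lia.
have hdh : d h = penc f g q (tp h) by apply: dig_h.
have hdh1 : d h.+1 = g (tp h.+1) by apply: dig_ne; apply/eqP; lia.
have hRh := Rs_S d h ltac:(lia).
have hRh1 := Rs_S d h.+1 ltac:(lia).
have hRh2 := Rs_lt d h.+1 (dig_lt q h tp) ltac:(lia).
have hdpos := dig_pos q h tp i. have hdub := dig_ub q h tp i.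
rewrite hdh in hRh. rewrite hdh1 in hRh1.
have e1 : pw i = B * pw h by rewrite -ei; apply: pwS; lia.
have e2 : pw h = B * pw h.+1 by apply: pwS; lia.
have hpw := pw_gt0 h.+1.
have hD : d i * pw i <= unat q (tp h.-1) (tp h) (tp h.+1) h by rewrite /unat -/i hdi; lia.
have hgt := g_ub (tp h.+1).
have hdlh1 := @dl B (g (tp h.+1)) (pw h.+1) ltac:(lia).
case: hsh => [[a [i' [hi' -> ->]]]|[[q' [am [a [ap [i' [hi' -> ->]]]]]]|[q' [ap [hq' -> ->]]]]].
- have hga := hg_rng a; have hgb := g_ub a.
  apply: (top_cmp _ _ _ _ _ _ _ _ _ _ _ _ hi hi' (esym (addn0 _)) (pw_gt0 i') _ _ _ hR hR' hdpos hdub hD hP).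
  + lia.
  + lia.
  + have := @dl B (g a) (pw i') ltac:(lia). have := pw_gt0 i'. lia.
  + move=> ei' ea; subst i'; left.
    have hpl1 := penc_lb q (tp h). have := @mle 1 (penc f g q (tp h)) (pw h) ltac:(lia).
    rewrite /unat -/i. lia.
- have hga := hg_rng am; have hgb := g_ub am.
  have hU : unat q' am a ap i' = g am * pw i'.-1 + (penc f g q' a * pw i' + g ap * pw i'.+1)
    by rewrite /unat addnA.
  apply: (top_cmp _ _ _ _ _ _ _ _ _ _ _ _ hi _ hU (trans_top q' a ap i' hi') _ _ _ hR hR' hdpos hdub hD hP).
  + lia.
  + lia.
  + lia.
  + exact: vnat_lt.
  + move=> ei' ea.
    have ei2 : i' = h by lia. subst i'.
    have eam : am = tp i by apply: hg_inj; lia.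
    subst am. rewrite hdi in hR.
    have hV := vnat_lt q' (tp i) a ap h hh.
    have hgap := g_ub ap.
    have hdlap := @dl B (g ap) (pw h.+1) ltac:(lia).
    rewrite /unat -/i.
    case: (ltngtP (penc f g q' a) (penc f g q (tp h))) => hpp.
    * left. have := @mle (penc f g q' a).+1 (penc f g q (tp h)) (pw h) hpp. lia.
    * right; left. have := @mle (penc f g q (tp h)).+1 (penc f g q' a) (pw h) hpp.
      rewrite -/i in hV. lia.
    * have [eq ea'] := penc_inj hpp. subst q' a.
      case: (ltngtP (g ap) (g (tp h.+1))) => hgg.
      -- left. have := @mle (g ap).+1 (g (tp h.+1)) (pw h.+1) hgg. lia.
      -- right; left. have := @mle (g (tp h.+1)).+1 (g ap) (pw h.+1) hgg.
         rewrite -/i in hV. idtac. lia.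
      -- have eap : ap = tp h.+1 by apply: hg_inj.
         subst ap. right; right; right. by rewrite /unat.
- have hpl := penc_lb q' (tm_dollar M). have hpu := penc_ub q' (tm_dollar M).
  apply: (top_cmp _ _ _ _ _ _ _ _ _ _ _ _ hi _ erefl (left_U ap) _ _ (left_V _ _) hR hR' hdpos hdub hD hP).
  + lia.
  + lia.
  + lia.
  + move=> ei' ea. rewrite ea hdi in hpl. have := gk (tp i). lia.
Qed.

Lemma left_good q tp P U V : tp 1 = tm_dollar M -> P + B * pw 1 <= B ^ T -> shape U V ->
  good (Rs (dig q 1 tp) 1) P
    (penc f g q (tm_dollar M) * pw 1 + g (tp 2) * pw 2)
    (g (tm_dollar M) * pw 1 + penc f g (tm_delta q (tm_dollar M)).1.1 (tp 2) * pw 2) U V.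
Proof.
move=> ht1 hP hsh.
set d := dig q 1 tp.
have hi : 1 <= 1 <= T by lia.
have hR := Rs_S d 1 ltac:(lia).
have hR' := Rs_lt d 1 (dig_lt q 1 tp) ltac:(lia).
have hd1 : d 1 = penc f g q (tm_dollar M) by rewrite /d dig_h ht1.
have hd2 : d 2 = g (tp 2) by apply: dig_ne.
have hR2 := Rs_S d 2 ltac:(lia).
have hR3 := Rs_lt d 2 (dig_lt q 1 tp) ltac:(lia).
have hdpos := dig_pos q 1 tp 1. have hdub := dig_ub q 1 tp 1.
have e1 : pw 1 = B * pw 2 by apply: pwS; lia.
have hpw := pw_gt0 2.
have hD : d 1 * pw 1 <= penc f g q (tm_dollar M) * pw 1 + g (tp 2) * pw 2 by rewrite hd1; lia.
have hpl0 := penc_lb q (tm_dollar M).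
case: hsh => [[a [i' [hi' -> ->]]]|[[q' [am [a [ap [i' [hi' -> ->]]]]]]|[q' [ap [hq' -> ->]]]]].
- have hga := hg_rng a; have hgb := g_ub a.
  apply: (top_cmp _ _ _ _ _ _ _ _ _ _ _ _ hi hi' (esym (addn0 _)) (pw_gt0 i') _ _ _ hR hR' hdpos hdub hD hP).
  + lia.
  + lia.
  + have := @dl B (g a) (pw i') ltac:(lia). have := pw_gt0 i'. lia.
  + move=> ei' ea. have := gk a. lia.
- have hga := hg_rng am; have hgb := g_ub am.
  have hU : unat q' am a ap i' = g am * pw i'.-1 + (penc f g q' a * pw i' + g ap * pw i'.+1)
    by rewrite /unat addnA.
  apply: (top_cmp _ _ _ _ _ _ _ _ _ _ _ _ hi _ hU (trans_top q' a ap i' hi') _ _ _ hR hR' hdpos hdub hD hP).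
  + lia.
  + lia.
  + lia.
  + exact: vnat_lt.
  + move=> ei' ea. have := gk am. lia.
- have hpl := penc_lb q' (tm_dollar M). have hpu := penc_ub q' (tm_dollar M).
  apply: (top_cmp _ _ _ _ _ _ _ _ _ _ _ _ hi _ erefl (left_U ap) _ _ (left_V _ _) hR hR' hdpos hdub hD hP).
  + lia.
  + lia.
  + lia.
  + move=> _ ea. rewrite hd1 in ea.
    have [eq _] := penc_inj ea. subst q'.
    have hgap := g_ub ap. have hg2 := g_ub (tp 2).
    case: (ltngtP (g ap) (g (tp 2))) => hgg.
    * left. have := @mle (g ap).+1 (g (tp 2)) (pw 2) hgg. lia.
    * right; left. have := @mle (g (tp 2)).+1 (g ap) (pw 2) hgg.
      have := left_V (tm_delta q (tm_dollar M)).1.1 ap. lia.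
    * have eap : ap = tp 2 by apply: hg_inj.
      subst ap. right; right; right. by [].
Qed.


Definition Wz R P j : int := ((R * Xn j + P * Yn j)%:Z)%R.

Lemma gstep j Ri Pi D E Rn Pn c : 1 <= j <= T -> Ri = D + Rn -> Pn = Pi + E ->
  is_coin f g B T c -> c = ((D * Xn j)%:Z - (E * Yn j)%:Z)%R ->
  Ri.+2 <= B ^ T -> Pi < B ^ T -> E < B ^ T -> E + B ^ T <= D * B ^ T + 1 ->
  (forall U V, shape U V -> good Ri Pi D E U V) ->
  greedy_step (is_coin f g B T) (Wz Ri Pi j) (Wz Rn Pn j).
Proof.
move=> hj hR hP hc hce hR2 hPi hE hED hgood.
exists c; split => //.
- rewrite hce /Wz -[X in (_ <= X)%R](subr0) le_nat_Z; subst; nia.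
- move=> c' hc' hle; rewrite hce; have XX := (@max_all _ _ _ _ _ hj hR2 hPi hE hED hgood c' hc' hle). exact XX.
- rewrite hce /Wz hR hP. apply/eqP; rewrite -subr_eq0; apply/eqP.
  rewrite !(PoszD, PoszM). lia.
Qed.

Lemma run_cat (coin : int -> Prop) m1 m2 W1 W2 W3 :
  greedy_run coin m1 W1 W2 -> greedy_run coin m2 W2 W3 -> greedy_run coin (m1 + m2) W1 W3.
Proof.
elim: m1 W1 => [|m IH] W1 /=; first by move=> ->.
by move=> [W' [hs hr]] h2; exists W'; split => //; apply: IH.
Qed.

Lemma copy_run j q h tp e n i : 1 <= j <= T -> (forall p, e p < B) ->
  (forall p, i <= p < i + n -> e p = dig q h tp p /\ (p.+2 <= h \/ h.+2 <= p)) ->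
  1 <= i -> i + n <= T.+1 ->
  greedy_run (is_coin f g B T) n (Wz (Rs (dig q h tp) i) (Ps e i) j)
    (Wz (Rs (dig q h tp) (i + n)) (Ps e (i + n)) j).
Proof.
move=> hj he; elim: n i => [|n IH] i hp hi hin /=; first by rewrite addn0.
exists (Wz (Rs (dig q h tp) i.+1) (Ps e i.+1) j); split; last first.
  rewrite -addSnnS; apply: IH => //; [move=> p hp'; apply: hp; lia | lia].
have [hei hpos] := hp i ltac:(lia).
set d := dig q h tp.
have hdi : d i = g (tp i) by apply: dig_ne; apply/eqP; lia.
have hdpos := dig_pos q h tp i.
have hdlt := @dl B (d i) (pw i) (dig_lt q h tp i).
have hbp := Bpw_le i hi.
apply: (@gstep j _ _ (d i * pw i) (d i * pw i) _ _ (c_copy g B T (tp i) i j) hj).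
- apply: Rs_S; lia.
- by rewrite Ps_S // hei.
- left; exists (tp i), i, j; split => //; lia.
- by rewrite copy_n hdi.
- have := Rs_le2 d i (dig_ub q h tp) ltac:(lia). lia.
- apply: Ps_lt => //; lia.
- have := pw_gt0 i; lia.
- apply: aux_prod; first by rewrite muln_gt0 pw_gt0 andbT; exact: hdpos.
  rewrite expn_gt0; have := B_ge2; lia.
- move=> U V hsh; apply: copy_good => //; first lia.
  apply: Ps_le => //; lia.
Qed.


Lemma trans_block j q h tp e : 1 <= j <= T -> (forall p, e p < B) -> 2 <= h < T ->
  e h.-1 * pw h.-1 + e h * pw h + e h.+1 * pw h.+1 = vnat q (tp h.-1) (tp h) (tp h.+1) h ->
  greedy_step (is_coin f g B T) (Wz (Rs (dig q h tp) h.-1) (Ps e h.-1) j)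
    (Wz (Rs (dig q h tp) h.+2) (Ps e h.+2) j).
Proof.
move=> hj he hh hE.
set d := dig q h tp.
have ei : h.-1.+1 = h by rewrite prednK //; lia.
have hR1 := Rs_S d h.-1 ltac:(lia). rewrite ei in hR1.
have hR2 := Rs_S d h ltac:(lia).
have hR3 := Rs_S d h.+1 ltac:(lia).
have hd1 : d h.-1 = g (tp h.-1) by apply: dig_ne; apply/eqP; lia.
have hd2 : d h = penc f g q (tp h) by apply: dig_h.
have hd3 : d h.+1 = g (tp h.+1) by apply: dig_ne; apply/eqP; lia.
rewrite hd1 in hR1; rewrite hd2 in hR2; rewrite hd3 in hR3.
have hgpos := hg_rng (tp h.-1).
have hBpw := B_le_pw h.-1 ltac:(lia).
have hmle := @mle 1 (g (tp h.-1)) (pw h.-1) ltac:(lia).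
have hvl := vnat_lt q (tp h.-1) (tp h) (tp h.+1) h hh.
have hbp := Bpw_le h.-1 ltac:(lia).
apply: (@gstep j _ _ (unat q (tp h.-1) (tp h) (tp h.+1) h) (vnat q (tp h.-1) (tp h) (tp h.+1) h)
   _ _ (c_trans f g B T q (tp h.-1) (tp h) (tp h.+1) h j) hj).
- rewrite /unat. lia.
- rewrite -hE. rewrite (Ps_S e h.+1); last lia.
  rewrite (Ps_S e h); last lia.
  rewrite -[in Ps e h]ei (Ps_S e h.-1); last lia.
  lia.
- right; left; exists q, (tp h.-1), (tp h), (tp h.+1), h, j; split => //; lia.
- by rewrite trans_n.
- have := Rs_le2 d h.-1 (dig_ub q h tp) ltac:(lia). lia.
- apply: Ps_lt => //; lia.
- lia.
- have := @mle 2 (unat q (tp h.-1) (tp h) (tp h.+1) h) (B ^ T) ltac:(rewrite /unat; have := B_ge2; lia).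
  lia.
- move=> U V hsh; apply: trans_good => //.
  apply: Ps_le => //; lia.
Qed.

Lemma left_block j q tp e : 1 <= j <= T -> (forall p, e p < B) -> ~~ halting q ->
  tp 1 = tm_dollar M ->
  e 1 * pw 1 + e 2 * pw 2 =
    g (tm_dollar M) * pw 1 + penc f g (tm_delta q (tm_dollar M)).1.1 (tp 2) * pw 2 ->
  greedy_step (is_coin f g B T) (Wz (Rs (dig q 1 tp) 1) (Ps e 1) j)
    (Wz (Rs (dig q 1 tp) 3) (Ps e 3) j).
Proof.
move=> hj he hq ht1 hE.
set d := dig q 1 tp.
have hR1 := Rs_S d 1 ltac:(lia).
have hR2 := Rs_S d 2 ltac:(lia).
have hd1 : d 1 = penc f g q (tm_dollar M) by rewrite /d dig_h ht1.
have hd2 : d 2 = g (tp 2) by apply: dig_ne.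
rewrite hd1 in hR1; rewrite hd2 in hR2.
have hpl := penc_lb q (tm_dollar M).
have hBpw := B_le_pw 1 ltac:(lia).
have hmle := @mle 1 (penc f g q (tm_dollar M)) (pw 1) ltac:(lia).
have hvl := left_V (tm_delta q (tm_dollar M)).1.1 (tp 2).
have hbp := Bpw_le 1 ltac:(lia).
apply: (@gstep j _ _ (penc f g q (tm_dollar M) * pw 1 + g (tp 2) * pw 2)
   (g (tm_dollar M) * pw 1 + penc f g (tm_delta q (tm_dollar M)).1.1 (tp 2) * pw 2)
   _ _ (c_left f g B T q (tp 2) j) hj).
- lia.
- rewrite -hE (Ps_S e 2) // (Ps_S e 1) // Ps_1. lia.
- right; right; exists q, (tp 2), j; split => //; lia.
- by rewrite left_n.
- have := Rs_le2 d 1 (dig_ub q 1 tp) ltac:(lia). lia.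
- apply: Ps_lt => //; lia.
- lia.
- have := @mle 2 (penc f g q (tm_dollar M) * pw 1 + g (tp 2) * pw 2) (B ^ T)
    ltac:(have := B_ge2; lia).
  lia.
- move=> U V hsh; apply: left_good => //.
  apply: Ps_le => //; lia.
Qed.


Lemma enc_Rs c : (enc f g B T c = (Rs (dig (cf_state c) (cf_head c) (cf_tape c)) 1)%:Z)%R.
Proof.
rewrite /enc /Rs (big_morph Posz PoszD (erefl _)).
by apply: eq_bigr => p _; rewrite PoszX -PoszM.
Qed.

Lemma inv_iter (x : seq (tm_G M))
  (hdollar : forall q, ~~ halting q ->
        (tm_delta q (tm_dollar M)).1.2 = tm_dollar M /\
        (tm_delta q (tm_dollar M)).2 = true) n :
  1 <= cf_head (iter n (@step M) (init_config x)) /\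
  cf_tape (iter n (@step M) (init_config x)) 1 = tm_dollar M.
Proof.
elim: n => [|n [IH1 IH2]] //=.
move: (iter n _ _) IH1 IH2 => [q h tp] /= IH1 IH2.
rewrite /step /=; case hq: (halting q) => //=.
case E: (tm_delta q (tp h)) => [[q' a'] dd] /=.
case: (eqVneq h 1) => [eh|neh].
  subst h; rewrite IH2 in E; have := hdollar q ltac:(by rewrite hq).
  rewrite E /= => [[-> ->]] /=; split => //.
case: dd E => _ /=; split; try lia.
all: rewrite /=; try lia. all: by [] || (case: ifP => // /eqP e; move: neh; rewrite -e).
Qed.


Lemma copy_cond q h tp q' h' tp' p : p != h -> p != h' -> (forall r, r != h -> tp' r = tp r) ->
  dig q' h' tp' p = dig q h tp p.
Proof. by move=> h1 h2 ht; rewrite !dig_ne // ht. Qed.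

Lemma main_sec (x : seq (tm_G M))
  (hdollar : forall q, ~~ halting q ->
        (tm_delta q (tm_dollar M)).1.2 = tm_dollar M /\
        (tm_delta q (tm_dollar M)).2 = true)
  (hhead : forall t, 1 <= t -> cf_head (conf_at x t) < T)
  (hhalt2 : forall t, 1 <= t -> halting (cf_state (conf_at x t)) -> cf_head (conf_at x t) = 2)
  j (hj : 1 <= j <= T) :
  exists m : nat, (m = T.-1 \/ m = T.-2) /\
    greedy_run (is_coin f g B T) m
      (enc f g B T (conf_at x j) * Bcur B T j)%R
      (enc f g B T (step (conf_at x j)) * Bnext B T j)%R.
Proof.
have [hh1 ht1] : 1 <= cf_head (conf_at x j) /\ cf_tape (conf_at x j) 1 = tm_dollar M
  := inv_iter x hdollar j.-1.
have hhT := hhead j ltac:(lia).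
have hh2 := hhalt2 j ltac:(lia).
rewrite !enc_Rs Bcur_n Bnext_n.
move: (conf_at x j) hh1 ht1 hhT hh2 => [q h tp] /= hh1 ht1 hhT hh2.
set d := dig q h tp.
set C' := step (Config q h tp).
set e := dig (cf_state C') (cf_head C') (cf_tape C').
have he : forall p, e p < B by move=> p; apply: dig_lt.
have -> : ((Rs d 1)%:Z * (Xn j)%:Z = Wz (Rs d 1) (Ps e 1) j)%R
  by rewrite /Wz Ps_1 mul0n addn0 PoszM.
have -> : ((Rs e 1)%:Z * (Yn j)%:Z = Wz (Rs d T.+1) (Ps e T.+1) j)%R
  by rewrite /Wz Rs_end mul0n add0n PoszM.
have hBB := B_ge2.
case hq: (halting q).
-
  have eh : h = 2 by apply: hh2.
  subst h.
  have hC' : C' = Config q 2 tp by rewrite /C' /step /= hq.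
  have ee : e = d by rewrite /e hC'.
  exists (1 + (T - 3)); split; first by right; lia.
  apply: run_cat.
    exists (Wz (Rs d 4) (Ps e 4) j); split => //.
    apply: (@trans_block j q 2 tp e) => //; try lia.
    by rewrite ee /vnat hq /unat /d /dig /=.
  have -> : T.+1 = 4 + (T - 3) by lia.
  apply: copy_run => //; last lia.
  move=> p hp; split; first by rewrite ee.
  right; lia.
-
  case E: (tm_delta q (tp h)) => [[q' a'] dd].
  have hC' : C' = Config q' (if dd then h.+1 else h.-1) (fun i => if i == h then a' else tp i)
    by rewrite /C' /step /= hq E.
  have htp' : forall r, r != h -> cf_tape C' r = tp r
    by move=> r hr; rewrite hC' /= (negbTE hr).
  case: (eqVneq h 1) => [eh1|neh1].
  +
    subst h.
    have := hdollar q ltac:(by rewrite hq). rewrite ht1 in E. rewrite E /= => [[ea' edd]].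
    subst a' dd.
    have eq' : q' = (tm_delta q (tm_dollar M)).1.1 by rewrite E.
    exists (1 + (T - 2)); split; first by left; lia.
    apply: run_cat.
      exists (Wz (Rs d 3) (Ps e 3) j); split => //.
      apply: left_block => //; first by rewrite hq.
      rewrite /e hC' /= dig_ne // dig_h /= eq'. by [].
    have -> : T.+1 = 3 + (T - 2) by lia.
    apply: copy_run => //; last lia.
    move=> p hp; split; last by right; lia.
    rewrite /e /d hC' /=; apply: copy_cond; try (apply/eqP; lia).
    by move=> r /negbTE ->.
  +
    have hh : 2 <= h < T by lia.
    have hneq : forall p, (p.+2 <= h \/ h.+2 <= p) -> e p = d p.
      move=> p hp; rewrite /e /d hC' /=; apply: copy_cond; try (apply/eqP; lia).
      - case: dd {hC' htp' E}; apply/eqP; lia.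
      - by move=> r /negbTE ->.
    exists ((h - 2) + (1 + (T - h.+1))); split; first by right; lia.
    apply: run_cat.
      have := @copy_run j q h tp e (h - 2) 1 hj he.
      have -> : 1 + (h - 2) = h.-1 by lia.
      apply => //; last lia.
      move=> p hp; split; [apply: hneq; lia | left; lia].
    apply: run_cat.
      exists (Wz (Rs d h.+2) (Ps e h.+2) j); split => //.
      apply: trans_block => //.
      rewrite /e hC' /vnat hq E /=.
      have n1 : (h.-1 == h.+1) = false by apply/eqP; lia.
      have n2 : (h == h.+1) = false by apply/eqP; lia.
      have n3 : (h.-1 == h) = false by apply/eqP; lia.
      have n4 : (h.+1 == h) = false by apply/eqP; lia.
      have n5 : (h == h.-1) = false by apply/eqP; lia.
      have n6 : (h.+1 == h.-1) = false by apply/eqP; lia.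
      case: dd {hC' htp' E hneq}; rewrite /dig /= ?n1 ?n2 ?n3 ?n4 ?n5 ?n6 !eqxx ?n3 ?n4 //.
    have -> : T.+1 = h.+2 + (T - h.+1) by lia.
    apply: copy_run => //; last lia.
    move=> p hp; split; [apply: hneq; lia | right; lia].
Qed.

End Main.

Theorem lemma3p2 (M : TM) (x : seq (tm_G M)) (T B : nat)
    (f : tm_Q M -> nat) (g : tm_G M -> nat)
    (* Sigma is a subset of Gamma \ {blank}, and x is a word over Sigma *)
    (hSigma : forall a, tm_Sigma M a -> a != tm_blank M)
    (hx : all (tm_Sigma M) x)
    (* f : Q -> {1..s} and g : Gamma -> {1..k} bijections *)
    (hf_inj : injective f) (hf_rng : forall q, (1 <= f q <= #|tm_Q M|)%N)
    (hg_inj : injective g) (hg_rng : forall a, (1 <= g a <= #|tm_G M|)%N)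
    (* base B >= (s+1)k + 2 *)
    (hB : ((#|tm_Q M|.+1) * #|tm_G M| + 2 <= B)%N)
    (* reading $ in a non-halting state: write $, move right *)
    (hdollar : forall q, ~~ halting q ->
        (tm_delta q (tm_dollar M)).1.2 = tm_dollar M /\
        (tm_delta q (tm_dollar M)).2 = true)
    (* T >= n + 3 *)
    (hT : ((size x) + 3 <= T)%N)
    (* M halts on x within T steps *)
    (hhalts : exists t, (t <= T)%N /\ halting (cf_state (conf_at x t.+1)))
    (* the head never reaches cell T *)
    (hhead : forall t, (1 <= t)%N -> (cf_head (conf_at x t) < T)%N)
    (* halting configurations: head over cell 2, cells 2 and 3 blank *)
    (hhaltcfg : forall t, (1 <= t)%N -> halting (cf_state (conf_at x t)) ->
        [/\ cf_head (conf_at x t) = 2%N,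
            cf_tape (conf_at x t) 2 = tm_blank M
          & cf_tape (conf_at x t) 3 = tm_blank M])
    (j : nat) (hj : (1 <= j <= T)%N) :
  exists m : nat, (m = T.-1 \/ m = T.-2) /\
    greedy_run (is_coin f g B T) m
      (enc f g B T (conf_at x j) * Bcur B T j)
      (enc f g B T (step (conf_at x j)) * Bnext B T j).
Proof.
have hT3 : (3 <= T)%N by lia.
apply: (@main_sec M f g B T hf_inj hf_rng hg_inj hg_rng hB hT3 x hdollar hhead _ j hj).
by move=> t ht hq; have [] := hhaltcfg t ht hq.
Qed.
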